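(* In the supercuspidal setting below, let $p$ be odd, $L/\mathbb Q_p$ unramified, $k=c_0\ge2$, assume $k\ge10$ or $p\ge10$, and let $\psi$ be a nontrivial Dirichlet character modulo $p^k$. Suppose that for some $i\in\{1,2,3\}$ and some $1\le j\le k$ we have $v_p(a_i)=j$. Then $\widehat H(\psi,a_1,a_2,a_3)=0$ unless $\psi$ has conductor $p^{k-j}$ and $v_p(a_1)=v_p(a_2)=v_p(a_3)=j$.
   Context: Supercuspidal setting: $p$ is a prime, $L/\mathbb Q_p$ a quadratic extension with ring of integers $\mathcal O_L$, ramification index $e\in\{1,2\}$, $d=v_p(\mathrm{disc}(L/\mathbb Q_p))$; $\eta_L$ is the nontrivial quadratic character of $\mathbb Q_p^\times$ trivial on $\mathrm{Nm}(L^\times)$. $\xi$ is a character of $L^\times$ with $\xi\neq\xi\circ(\text{Galois conjugation})$ and $\xi|_{\mathbb Q_p^\times}=\eta_L$, with $(L/\mathbb Q_p,\xi)$ an admissible pair (corresponding to a trivial central character dihedral supercuspidal representation of $\mathrm{PGL}_2(\mathbb Q_p)$). $c(\xi)$ is its conductor exponent and $c_0=c(\xi)/e$. Set $\kappa=c_0$ if $L$ unramified, $\kappa=c_0+1$ if $L$ ramified. Let $\gamma$ be a fixed complex number of modulus $1$ depending only on $L$. For integers $m,n$ and $k\ge1$, $$H(m,n;p^k)=\overline\gamma\,p^{-d/2}\sum_{\substack{t\in(\mathcal O_L/p^k\mathcal O_L)^\times\\ \mathrm{Nm}(t)\equiv mn\ (p^k)}}\xi(t)\,e_{p^k}(-\mathrm{Tr}(t))$$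 if $k\ge\kappa$ and $p\nmid mn$, and $H(m,n;p^k)=0$ otherwise. For a Dirichlet character $\psi$ mod $p^k$ and integers $a_1,a_2,a_3$, $$\widehat H(\psi,a_1,a_2,a_3)=p^{-2k}\sum_{u,x_1,x_2,x_3\bmod p^k}\overline\psi(u)H(\overline u x_1x_2x_3,1;p^k)\,e_{p^k}(a_1x_1+a_2x_2+a_3x_3-ua_1a_2a_3).$$ Here $e_q(x)=\exp(2\pi i x/q)$, $\overline u$ is the inverse mod $p^k$, and Dirichlet characters vanish on non-units. *)

(* Defs.v *)
From HB Require Import structures.
From mathcomp Require Import all_boot all_order all_algebra algC.
Set Implicit Arguments. Unset Strict Implicit. Unset Printing Implicit Defensive.
Import Order.TTheory GRing.Theory Num.Theory.
Local Open Scope ring_scope.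

(* O_L / p^k O_L for L = Q_p(sqrt eps) unramified (eps a non-residue mod p, p odd):
   pairs (a, b) standing for a + b sqrt(eps). *)
Definition ZL (p k : nat) := ('Z_(p ^ k) * 'Z_(p ^ k))%type.

Definition epsZ (p k : nat) (eps : int) : 'Z_(p ^ k) := eps%:~R.

Definition mulL (p k : nat) (eps : int) (s t : ZL p k) : ZL p k :=
  (s.1 * t.1 + epsZ p k eps * (s.2 * t.2), s.1 * t.2 + s.2 * t.1).

Definition oneL (p k : nat) : ZL p k := (1, 0).

Definition unitL (p k : nat) (eps : int) (t : ZL p k) : bool :=
  [exists s : ZL p k, mulL eps t s == oneL p k].

Definition normL (p k : nat) (eps : int) (t : ZL p k) : 'Z_(p ^ k) :=
  t.1 ^+ 2 - epsZ p k eps * t.2 ^+ 2.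

Definition trL (p k : nat) (t : ZL p k) : 'Z_(p ^ k) := t.1 + t.1.

Definition conjL (p k : nat) (t : ZL p k) : ZL p k := (t.1, - t.2).

Definition one_modL (p k : nat) (n : nat) (t : ZL p k) : bool :=
  (val t.1 == 1 %[mod p ^ n])%N && (val t.2 == 0 %[mod p ^ n])%N.

(* e_{p^k}(x) = exp(2 pi i x / p^k); (q.-root (-1)) = exp(i pi / q) in algC *)
Definition eC (p k : nat) (x : 'Z_(p ^ k)) : algC :=
  ((p ^ k)%N.-root (-1)) ^+ (2 * val x).

(* xi : a character of L^x, seen through (O_L/p^k O_L)^x (its conductor is
   c(xi) = k), with xi|_{Q_p^x} = eta_L (trivial on Z_p^x as L is unramified),
   xi <> xi o conj, and c(xi) = k exactly. *)
Definition xi_hyp (p k : nat) (eps : int) (xi : ZL p k -> algC) : Prop :=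
  [/\ xi (oneL p k) = 1,
      (forall s t, unitL eps s -> unitL eps t -> xi (mulL eps s t) = xi s * xi t),
      (forall a : 'Z_(p ^ k), a \is a GRing.unit -> xi (a, 0) = 1),
      (exists2 t, unitL eps t & xi (conjL t) != xi t) &
      (exists2 t, unitL eps t && one_modL (k.-1) t & xi t != 1)].

(* H(m, n; p^k) in the unramified case (d = 0, kappa = c0 = k, so k >= kappa) *)
Definition Hfun (p k : nat) (eps : int) (gamma : algC) (xi : ZL p k -> algC)
  (m n : 'Z_(p ^ k)) : algC :=
  if (k <= k)%N && ((m * n) \is a GRing.unit) then
    gamma^* * \sum_(t : ZL p k | unitL eps t && (normL eps t == m * n))
                 xi t * eC (- trL t)
  else 0.

Definition dirichlet_char (p k : nat) (psi : 'Z_(p ^ k) -> algC) : Prop :=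
  [/\ psi 1 = 1,
      (forall u v, psi (u * v) = psi u * psi v) &
      (forall u, u \isn't a GRing.unit -> psi u = 0)].

Definition triv_mod (p k : nat) (psi : 'Z_(p ^ k) -> algC) (f : nat) : Prop :=
  forall u : 'Z_(p ^ k), u \is a GRing.unit -> (val u == 1 %[mod p ^ f])%N ->
    psi u = 1.

Definition conductor_exp (p k : nat) (psi : 'Z_(p ^ k) -> algC) (f : nat) : Prop :=
  triv_mod psi f /\ (forall g, (g < f)%N -> ~ triv_mod psi g).

Definition Hhat (p k : nat) (eps : int) (gamma : algC) (xi : ZL p k -> algC)
  (psi : 'Z_(p ^ k) -> algC) (a1 a2 a3 : int) : algC :=
  ((p%:R : algC) ^+ (2 * k))^-1 *
  \sum_(u : 'Z_(p ^ k)) \sum_(x1 : 'Z_(p ^ k)) \sum_(x2 : 'Z_(p ^ k))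
    \sum_(x3 : 'Z_(p ^ k))
      (psi u)^* * Hfun eps gamma xi (u^-1 * x1 * x2 * x3) 1 *
      eC (a1%:~R * x1 + a2%:~R * x2 + a3%:~R * x3 - u * a1%:~R * a2%:~R * a3%:~R).

Definition vp_eq (p : nat) (a : int) (j : nat) : bool :=
  (a != 0) && (logn p `|a|%N == j).

(* Main.v *)
Require Import Defs.
From HB Require Import structures.
From mathcomp Require Import all_boot all_order all_algebra algC cyclotomic.
From mathcomp Require Import ring lra zify.
Set Implicit Arguments. Unset Strict Implicit. Unset Printing Implicit Defensive.
Import Order.TTheory GRing.Theory Num.Theory.
Local Open Scope ring_scope.

Lemma norm1_conj (x : algC) : `|x| = 1 -> x * x^* = 1.
Proof. by move=> h; rewrite -normCK h expr1n. Qed.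

Lemma pow_norm1 (x : algC) (g : nat) : (0 < g)%N -> `|x ^+ g| = 1 -> `|x| = 1.
Proof.
by move=> g0 h; apply/eqP; rewrite -(pexpr_eq1 g0) ?normr_ge0 // -normrX h.
Qed.

Lemma realCC (x : algC) : x + x^* \is Num.real.
Proof. by rewrite CrealE rmorphD /= conjCK addrC. Qed.

Lemma sq1 (x : algC) : x * x^* = 1 -> (x - 1) * (x - 1)^* = 2 - (x + x^*).
Proof. by move=> h; rewrite rmorphB /= rmorph1 mulrBr !mulrBl h; ring. Qed.

Lemma closer_root (g : nat) (z : algC) : (1 < g)%N -> `|z| = 1 -> z != 1 ->
  exists v, v ^+ g = z /\ z + z^* < v + v^*.
Proof.
case: g => [//|g'] g1 nz z1; have g0 : (0 < g'.+1)%N by [].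
set g := g'.+1 in g1 g0 *.
have [w pw] := C_prim_root_exists g0.
set v0 := g.-root z.
have v0g : v0 ^+ g = z by rewrite rootCK.
have nv0 : `|v0| = 1 by apply: (pow_norm1 g0); rewrite v0g.
have wg : w ^+ g = 1 by apply: prim_expr_order.
have nw : `|w| = 1 by apply: (pow_norm1 g0); rewrite wg normr1.
pose v (i : nat) := v0 * w ^+ i.
have vg i : v i ^+ g = z by rewrite /v exprMn v0g -exprM mulnC exprM wg expr1n mulr1.
have nvi i : v i * (v i)^* = 1 by apply: norm1_conj; rewrite normrM normrX nv0 nw expr1n mulr1.
case: (boolP [exists i : 'I_g, z + z^* < v i + (v i)^*]) => [/existsP [i Hi]|H].
  by exists (v i).
have Hle (i : 'I_g) : v i + (v i)^* <= z + z^*.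
  rewrite real_leNgt ?realCC //; apply/negP => hi; move/negP: H; apply.
  by apply/existsP; exists i.
pose S (i : nat) := \sum_(a < g) v i ^+ a.
have key1 : \sum_(i < g) S i = g%:R.
  rewrite /S exchange_big /=.
  rewrite (eq_bigr (fun a : 'I_g => v0 ^+ a * \sum_(i < g) (w ^+ a) ^+ i)); last first.
    by move=> a _; rewrite mulr_sumr; apply: eq_bigr => i _; rewrite /v exprMn -!exprM mulnC.
  rewrite /g big_ord_recl /= [X in _ + X]big1 ?addr0.
    by rewrite expr0 mul1r (eq_bigr (fun _ => 1)) ?sumr_const ?card_ord // => i _; rewrite expr1n.
  move=> a _; apply/eqP; rewrite mulf_eq0; apply/orP; right.
  have wa1 : w ^+ (bump 0 a) != 1.
    rewrite -(prim_order_dvd pw); apply/negP => /dvdn_leq; rewrite /bump /= add1n.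
    by move=> /(_ isT); have := ltn_ord a; rewrite /g; lia.
  have : (w ^+ bump 0 a - 1) * \sum_(i < g) (w ^+ bump 0 a) ^+ i = 0.
    by rewrite -subrX1 -exprM mulnC exprM wg expr1n subrr.
  by move/eqP; rewrite mulf_eq0 subr_eq0 (negbTE wa1).
have keyS i : (v i - 1) * S i = z - 1 by rewrite /S -subrX1 vg.
have zpos : 0 < (z - 1) * (z - 1)^*.
  by rewrite -normCK exprn_gt0 // normr_gt0 subr_eq0.
have key2 (i : 'I_g) : S i * (S i)^* <= 1.
  have e1 : (v i - 1) * (v i - 1)^* * (S i * (S i)^*) = (z - 1) * (z - 1)^*.
    by rewrite -(keyS i) rmorphM /=; ring.
  have le1 : (z - 1) * (z - 1)^* <= (v i - 1) * (v i - 1)^*.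
    rewrite (sq1 (norm1_conj nz)) (sq1 (nvi i)) lerD2l lerN2 //.
  have pos : 0 < (v i - 1) * (v i - 1)^* by apply: lt_le_trans le1.
  rewrite -(ler_pM2l pos) mulr1 e1 //.
have key3 : \sum_(i < g) (1 - S i) * (1 - S i)^* = 0.
  apply/eqP; rewrite eq_le; apply/andP; split; last first.
    by apply: sumr_ge0 => i _; rewrite -normCK exprn_ge0.
  apply: (le_trans (y := \sum_(i < g) (2 - (S i + (S i)^*)))).
    apply: ler_sum => i _; rewrite rmorphB /= rmorph1.
    rewrite -subr_ge0.
    have -> : 2 - (S i + (S i)^*) - (1 - S i) * (1 - (S i)^*) = 1 - S i * (S i)^* by ring.
    by rewrite subr_ge0 key2.
  rewrite sumrB big_split /= [X in _ - X]big_split /= -rmorph_sum key1.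
  by rewrite !sumr_const card_ord rmorph_nat subrr.
have Si1 (i : 'I_g) : S i = 1.
  have := key3; move/eqP; rewrite psumr_eq0 => [/allP/(_ i (mem_index_enum _))|j _].
    by rewrite -normCK sqrf_eq0 normr_eq0 subr_eq0 => /eqP ->.
  by rewrite -normCK exprn_ge0.
have veq (i : 'I_g) : v i = z.
  by have := keyS i; rewrite Si1 mulr1 => /eqP; rewrite subr_eq addrNK => /eqP.
have e0 := veq (Ordinal g0); have e1 := veq (Ordinal g1).
rewrite /v /= expr0 mulr1 in e0; rewrite /v /= expr1 in e1.
have v00 : v0 != 0 by rewrite -normr_eq0 nv0 oner_eq0.
have : v0 * w = v0 * 1 by rewrite e1 mulr1 e0.
move/(mulfI v00) => w1.
have := prim_order_dvd pw 1; rewrite expr1 w1 eqxx => h.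
by move: g1; rewrite (eqP (etrans (esym (dvdn1 g)) h)).
Qed.

Lemma zeta_prim (p d : nat) : (1 < p)%N -> (0 < d)%N ->
  ((p * d)%N.-root (-1 : algC)) ^+ (2 * d) != 1.
Proof.
move=> p1 d0; set n := (p * d)%N; set ze := n.-root (-1 : algC).
have n0 : (0 < n)%N by rewrite /n muln_gt0 d0 ltnW.
have zn : ze ^+ n = -1 by rewrite rootCK.
have m11 : (-1 : algC) != 1 by rewrite -subr_eq0 -opprD oppr_eq0 (_ : 1 + 1 = 2%:R) // pnatr_eq0.
apply/negP => /eqP h.
have zd : ze ^+ d = -1.
  have : (ze ^+ d) ^+ 2 == 1 by rewrite -exprM mulnC h.
  rewrite sqrf_eq1 => /orP [/eqP e|/eqP //].
  by move: zn; rewrite /n mulnC exprM e expr1n => /eqP; rewrite eq_sym (negbTE m11).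
have nze : `|ze| = 1 by apply: (pow_norm1 n0); rewrite zn normrN normr1.
have ze1 : ze != 1 by apply/eqP => e; move: zd; rewrite e expr1n => /eqP; rewrite eq_sym (negbTE m11).
have [v [vp vlt]] := closer_root p1 nze ze1.
have vn : v ^+ n = -1 by rewrite /n exprM vp zd.
have key (y : algC) : y ^+ n = -1 -> 0 <= 'Im y -> ~ (ze + ze^* < y + y^*).
  move=> yn hy; have := rootC_Re_max n0 yn hy; rewrite -/ze !ReE.
  by rewrite ler_pM2r ?invr_gt0 ?ltr0n // => h1 h2; move: (le_lt_trans h1 h2); rewrite ltxx.
have [hI|hI] := boolP (0 <= 'Im v); first exact: (key v vn hI vlt).
apply: (key v^*).
- by rewrite -rmorphXn vn rmorphN rmorph1.
- by rewrite Im_conj oppr_ge0 ltW // real_ltNge ?Creal_Im ?real0.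
- by rewrite conjCK [v^* + v]addrC.
Qed.

Section Z.
Variables (p k : nat).
Hypothesis np : (1 < p ^ k)%N.
Local Notation R := 'Z_(p ^ k).

Lemma valZ (x : R) : x%:R = x.
Proof. exact: natr_Zp. Qed.

Lemma valZn (m : nat) : val (m%:R : R) = (m %% p ^ k)%N.
Proof. exact: val_Zp_nat. Qed.

Lemma natZ0 (m : nat) : ((m%:R : R) == 0) = (p ^ k %| m)%N.
Proof.
apply/eqP/idP => [h|h].
  by have := valZn m; rewrite h /= => /esym/eqP; rewrite -/(dvdn _ _).
by apply: val_inj; rewrite valZn /=; apply/eqP.
Qed.

Lemma val_lt (x : R) : (val x < p ^ k)%N.
Proof. by move: (valZn x); rewrite valZ => ->; rewrite ltn_mod ltnW. Qed.

Local Notation ze := ((p ^ k)%N.-root (-1 : algC)).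

Lemma ze2n : ze ^+ (2 * p ^ k)%N = 1.
Proof. by rewrite (mulnC 2%N) exprM rootCK ?(ltnW np) // sqrrN expr1n. Qed.

Lemma ze_mod m : ze ^+ (2 * (m %% p ^ k))%N = ze ^+ (2 * m)%N.
Proof.
rewrite {2}(divn_eq m (p ^ k)).
have -> : (2 * (m %/ p ^ k * p ^ k + m %% p ^ k) = (2 * p ^ k) * (m %/ p ^ k) + 2 * (m %% p ^ k))%N.
  by ring.
by rewrite exprD (exprM _ (2 * p ^ k)%N) ze2n expr1n mul1r.
Qed.

Lemma eC_nat m : eC (m%:R : R) = ze ^+ (2 * m)%N.
Proof. by rewrite /eC valZn ze_mod. Qed.

Lemma eCD (x y : R) : eC (x + y) = eC x * eC y.
Proof.
by rewrite -(valZ x) -(valZ y) -natrD !eC_nat mulnDr exprD.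
Qed.

Lemma eC0 : eC (0 : R) = 1.
Proof. by rewrite -(mulr0n (1 : R)) eC_nat muln0 expr0. Qed.

Lemma eCMn (x : R) m : eC (x * m%:R) = eC x ^+ m.
Proof.
elim: m => [|m IH]; first by rewrite mulr0 eC0 expr0.
by rewrite mulrS mulrDr mulr1 eCD IH exprS mulrC.
Qed.

Lemma eCP : (1 < p)%N -> (0 < k)%N -> eC ((p ^ k.-1)%:R : R) != 1.
Proof.
move=> p1 k0; rewrite eC_nat.
have e : (p * p ^ k.-1 = p ^ k)%N by rewrite -expnS prednK.
have : (0 < p ^ k.-1)%N by rewrite expn_gt0 ltnW.
move=> /(zeta_prim p1); rewrite e.
by [].
Qed.

Lemma eCPu (c : R) : (1 < p)%N -> (0 < k)%N -> c \is a GRing.unit ->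
  eC ((p ^ k.-1)%:R * c) != 1.
Proof.
move=> p1 k0 cu; apply: contra (eCP p1 k0) => /eqP h.
have -> : ((p ^ k.-1)%:R : R) = (p ^ k.-1)%:R * c * (val (c^-1))%:R.
  by rewrite valZ -mulrA mulrV // mulr1.
by rewrite eCMn h expr1n.
Qed.

Lemma pk0 : ((p ^ k)%:R : R) = 0.
Proof. by apply/eqP; rewrite natZ0. Qed.

Lemma unit1p (r : R) : (1 + p%:R * r) \is a GRing.unit.
Proof.
set y := - (p%:R * r).
have yk : y ^+ k = 0 by rewrite /y exprNn exprMn -natrX pk0 !mul0r mulr0.
apply/unitrP; exists (\sum_(i < k) y ^+ i).
have e : (1 + p%:R * r) * \sum_(i < k) y ^+ i = 1.
  have := subrX1 y k; rewrite yk => h.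
  have -> : 1 + p%:R * r = - (y - 1) by rewrite /y; ring.
  by rewrite mulNr -h; ring.
by split; rewrite // mulrC.
Qed.

Lemma unit_addp (x r : R) : x \is a GRing.unit -> (x + p%:R * r) \is a GRing.unit.
Proof.
move=> xu; have -> : x + p%:R * r = x * (1 + p%:R * (x^-1 * r)).
  by rewrite mulrDr mulr1 mulrCA (mulrA x) (mulrV xu) mul1r.
by rewrite unitrM xu unit1p.
Qed.

Lemma val_cong1 g z : (g <= k)%N -> (val ((1 + p ^ g * z)%:R : R) == 1 %[mod p ^ g])%N.
Proof.
move=> gk; rewrite valZn modn_dvdm ?dvdn_exp2l // addnC mulnC modnMDl //.
Qed.
End Z.

Lemma geo0 (w : algC) (m : nat) : w ^+ m = 1 -> w != 1 -> \sum_(z < m) w ^+ z = 0.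
Proof.
move=> wm w1; have := subrX1 w m; rewrite wm subrr => /esym/eqP.
by rewrite mulf_eq0 subr_eq0 (negbTE w1) => /eqP.
Qed.

Section T.
Variables (p k : nat) (eps : int) (gamma : algC) (xi : ZL p k -> algC) (psi : 'Z_(p ^ k) -> algC).
Hypothesis np : (1 < p ^ k)%N.
Hypothesis dpsi : dirichlet_char psi.
Local Notation R := 'Z_(p ^ k).

Definition Q4 (G : R -> R -> R -> R -> algC) : algC :=
  \sum_(u : R) \sum_(x1 : R) \sum_(x2 : R) \sum_(x3 : R) G u x1 x2 x3.

Lemma Q4_ext G G' : (forall u x1 x2 x3, G u x1 x2 x3 = G' u x1 x2 x3) -> Q4 G = Q4 G'.
Proof.
move=> h; apply: eq_bigr => u _; apply: eq_bigr => x1 _; apply: eq_bigr => x2 _.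
by apply: eq_bigr => x3 _.
Qed.

Lemma Q4_scale c G : Q4 (fun u x1 x2 x3 => c * G u x1 x2 x3) = c * Q4 G.
Proof.
rewrite /Q4 mulr_sumr; apply: eq_bigr => u _; rewrite mulr_sumr.
apply: eq_bigr => x1 _; rewrite mulr_sumr; apply: eq_bigr => x2 _.
by rewrite mulr_sumr.
Qed.

Lemma Q4_sum m (G : nat -> R -> R -> R -> R -> algC) :
  \sum_(z < m) Q4 (G z) = Q4 (fun u x1 x2 x3 => \sum_(z < m) G z u x1 x2 x3).
Proof.
rewrite /Q4 exchange_big; apply: eq_bigr => u _; rewrite exchange_big.
apply: eq_bigr => x1 _; rewrite exchange_big; apply: eq_bigr => x2 _.
by rewrite exchange_big.
Qed.

Lemma Q4_reindex (w : R) G : w \is a GRing.unit ->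
  Q4 G = Q4 (fun u x1 x2 x3 => G (w * u) (w * x1) x2 x3).
Proof.
move=> wu; rewrite /Q4 (reindex_inj (mulrI wu)) /=; apply: eq_bigr => u _.
by rewrite (reindex_inj (mulrI wu)).
Qed.

Definition Fs (A1 A2 A3 : R) (u x1 x2 x3 : R) : algC :=
  (psi u)^* * Hfun eps gamma xi (u^-1 * x1 * x2 * x3) 1 *
      eC (A1 * x1 + A2 * x2 + A3 * x3 - u * A1 * A2 * A3).

Lemma Fs_unit A1 A2 A3 u x1 x2 x3 : Fs A1 A2 A3 u x1 x2 x3 != 0 ->
  u \is a GRing.unit /\ x1 \is a GRing.unit.
Proof.
rewrite /Fs /Hfun; case: ifP => [/andP [_ hu] | _]; last by rewrite mulr0 mul0r eqxx.
case: dpsi => _ _ h0 hF.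
have uu : u \is a GRing.unit.
  apply: contraR hF => /h0 ->; by rewrite rmorph0 !mul0r.
split => //.
by move: hu; rewrite mulr1 !unitrM => /andP [/andP [/andP [_ ->]]].
Qed.

Lemma psiM u v : psi (u * v) = psi u * psi v.
Proof. by case: dpsi. Qed.

Lemma psi_unit u : psi u != 0 -> u \is a GRing.unit.
Proof. by case: dpsi => _ _ h; apply: contraR => /h ->. Qed.

Lemma lemA (A1 A2 A3 w : R) : w \is a GRing.unit -> psi w != 1 -> A1 * (w - 1) = 0 ->
  Q4 (Fs A1 A2 A3) = 0.
Proof.
move=> wu pw hA.
have e : Q4 (Fs A1 A2 A3) = (psi w)^* * Q4 (Fs A1 A2 A3).
  rewrite {1}(Q4_reindex _ wu) -Q4_scale; apply: Q4_ext => u x1 x2 x3.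
  rewrite /Fs psiM rmorphM /=.
  have [pu0|pu0] := eqVneq (psi u) 0; first by rewrite pu0 rmorph0 mulr0 !mul0r mulr0.
  have uu := psi_unit pu0.
  have -> : (w * u)^-1 * (w * x1) * x2 * x3 = u^-1 * x1 * x2 * x3.
    by rewrite invrM // -(mulrA u^-1) (mulrA w^-1) (mulVr wu) mul1r.
  have -> : A1 * (w * x1) + A2 * x2 + A3 * x3 - w * u * A1 * A2 * A3 =
      A1 * x1 + A2 * x2 + A3 * x3 - u * A1 * A2 * A3 + (A1 * (w - 1)) * (x1 - u * A2 * A3).
    by ring.
  by rewrite hA mul0r addr0; ring.
have : (1 - (psi w)^*) * Q4 (Fs A1 A2 A3) = 0 by rewrite mulrBl mul1r -e subrr.
move/eqP; rewrite mulf_eq0 subr_eq0 => /orP [h|/eqP //].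
by move: pw; rewrite -(inj_eq (can_inj conjCK)) rmorph1 eq_sym h.
Qed.

Lemma lemB (A1 A2 A3 c q : R) (g : nat) : (1 < p)%N -> (0 < k)%N ->
  (0 < g)%N -> (g <= k)%N -> triv_mod psi g ->
  c \is a GRing.unit -> A1 * (p ^ g)%:R = (p ^ k.-1)%:R * c ->
  A2 * A3 = p%:R * q -> Q4 (Fs A1 A2 A3) = 0.
Proof.
move=> p1 k0 g0 gk tg cu hA hq.
pose P : R := (p ^ k.-1)%:R.
pose om u x1 : algC := eC (P * (c * (x1 - u * A2 * A3))).
have e z : Q4 (Fs A1 A2 A3) = Q4 (fun u x1 x2 x3 => Fs A1 A2 A3 u x1 x2 x3 * om u x1 ^+ z).
  pose w : R := (1 + p ^ g * z)%:R.
  have wu : w \is a GRing.unit.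
    rewrite /w natrD natrM; have -> : (p ^ g)%:R = p%:R * ((p ^ g.-1)%:R : R).
      by rewrite -natrM -expnS prednK.
    by rewrite -mulrA unit1p.
  have pw : psi w = 1 by apply: tg => //; apply: val_cong1.
  rewrite {1}(Q4_reindex _ wu); apply: Q4_ext => u x1 x2 x3.
  rewrite /Fs psiM pw mul1r.
  have [pu0|pu0] := eqVneq (psi u) 0; first by rewrite pu0 rmorph0 !mul0r.
  have uu := psi_unit pu0.
  have -> : (w * u)^-1 * (w * x1) * x2 * x3 = u^-1 * x1 * x2 * x3.
    by rewrite invrM // -(mulrA u^-1) (mulrA w^-1) (mulVr wu) mul1r.
  have -> : A1 * (w * x1) + A2 * x2 + A3 * x3 - w * u * A1 * A2 * A3 =
      A1 * x1 + A2 * x2 + A3 * x3 - u * A1 * A2 * A3 + (P * (c * (x1 - u * A2 * A3))) * z%:R.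
    have -> : P * (c * (x1 - u * A2 * A3)) = A1 * (p ^ g)%:R * (x1 - u * A2 * A3) by rewrite hA mulrA.
    rewrite /w natrD natrM; ring.
  by rewrite (eCD np) (eCMn np) -/(om u x1) mulrA.
have : (p%:R : algC) * Q4 (Fs A1 A2 A3) = 0.
  have -> : (p%:R : algC) * Q4 (Fs A1 A2 A3) = \sum_(z < p) Q4 (Fs A1 A2 A3) by rewrite sumr_const card_ord mulr_natl.
  rewrite (eq_bigr _ (fun (z : 'I_p) _ => e z)) (Q4_sum p (fun z u x1 x2 x3 => Fs A1 A2 A3 u x1 x2 x3 * om u x1 ^+ z)).
  rewrite -[RHS](mul0r (Q4 (Fs A1 A2 A3))) -Q4_scale; apply: Q4_ext => u x1 x2 x3 /=; rewrite mul0r -mulr_sumr.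
  have [F0|F0] := eqVneq (Fs A1 A2 A3 u x1 x2 x3) 0; first by rewrite F0 mul0r.
  have [uu x1u] := Fs_unit F0.
  rewrite geo0 ?mulr0 //.
    rewrite /om -(eCMn np) -mulrA (mulrC _ p%:R) mulrA -natrM mulnC -expnS prednK //.
    by rewrite (pk0 np) mul0r (eC0 np).
  apply: eCPu => //; rewrite unitrM cu /=.
  have -> : x1 - u * A2 * A3 = x1 + p%:R * (- (u * q)) by rewrite -mulrA hq; ring.
  exact: unit_addp.
move/eqP; rewrite mulf_eq0 pnatr_eq0 => /orP [/eqP p0|/eqP //].
by move: p1; rewrite p0.
Qed.

Lemma Q4_swap12 G : Q4 G = Q4 (fun u x1 x2 x3 => G u x2 x1 x3).
Proof. by apply: eq_bigr => u _; rewrite exchange_big. Qed.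

Lemma Q4_swap23 G : Q4 G = Q4 (fun u x1 x2 x3 => G u x1 x3 x2).
Proof. by apply: eq_bigr => u _; apply: eq_bigr => x1 _; rewrite exchange_big. Qed.

Lemma Q4_swap13 G : Q4 G = Q4 (fun u x1 x2 x3 => G u x3 x2 x1).
Proof. by rewrite Q4_swap12 Q4_swap23 Q4_swap12. Qed.

Lemma sym12 A1 A2 A3 : Q4 (Fs A1 A2 A3) = Q4 (Fs A2 A1 A3).
Proof.
rewrite Q4_swap12; apply: Q4_ext => u x1 x2 x3; rewrite /Fs.
have -> : u^-1 * x2 * x1 * x3 = u^-1 * x1 * x2 * x3 by ring.
have -> : A1 * x2 + A2 * x1 + A3 * x3 - u * A1 * A2 * A3 = A2 * x1 + A1 * x2 + A3 * x3 - u * A2 * A1 * A3 by ring.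
by [].
Qed.

Lemma sym13 A1 A2 A3 : Q4 (Fs A1 A2 A3) = Q4 (Fs A3 A2 A1).
Proof.
rewrite Q4_swap13; apply: Q4_ext => u x1 x2 x3; rewrite /Fs.
have -> : u^-1 * x3 * x2 * x1 = u^-1 * x1 * x2 * x3 by ring.
have -> : A1 * x3 + A2 * x2 + A3 * x1 - u * A1 * A2 * A3 = A3 * x1 + A2 * x2 + A1 * x3 - u * A3 * A2 * A1 by ring.
by [].
Qed.

Lemma intZ (b : int) : (b%:~R : R) = (-1) ^+ (b < 0)%R * (`|b|%N)%:R.
Proof.
rewrite {1}(intEsign b) intrM rmorphXn /= rmorphN1.
by rewrite -pmulrn.
Qed.

Lemma sgnU (b : int) : ((-1) ^+ (b < 0)%R : R) \is a GRing.unit.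
Proof. by rewrite unitrX // unitrN1. Qed.

Lemma triv_mono g g' : (g <= g')%N -> triv_mod psi g -> triv_mod psi g'.
Proof.
move=> le h u uu /eqP hu; apply: h => //; apply/eqP.
by rewrite -(modn_dvdm _ (dvdn_exp2l p le)) hu modn_dvdm // dvdn_exp2l.
Qed.


Lemma packA (b1 b2 b3 : int) (d : nat) : (1 < p)%N ->
  Q4 (Fs b1%:~R b2%:~R b3%:~R) != 0 -> (d <= k)%N -> (p ^ d %| `|b1|)%N ->
  triv_mod psi (k - d).
Proof.
move=> p1 T0 dk hd u uu hu; apply/eqP; apply: contraNT T0 => pu.
apply/eqP. apply: lemA uu pu _.
rewrite intZ -mulrA; suff -> : ((`|b1|%N)%:R : R) * (u - 1) = 0 by rewrite mulr0.
case: (ltnP d k) => [dlt | dge].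
  have pk1 : (1 < p ^ (k - d))%N by rewrite -(expn0 p) ltn_exp2l // subn_gt0.
  have e : val u = (val u %/ p ^ (k - d) * p ^ (k - d) + 1)%N.
    by rewrite {1}(divn_eq (val u) (p ^ (k - d))) (eqP hu) modn_small.
  rewrite -(valZ u) e natrD addrK -natrM; apply/eqP; rewrite natZ0 //.
  apply: (@dvdn_trans (p ^ d * p ^ (k - d))%N); first by rewrite -expnD subnKC // ltnW.
  by apply: dvdn_mul => //; apply: dvdn_mull.
have ek : d = k by apply/eqP; rewrite eqn_leq dk dge.
rewrite ek in hd.
have -> : ((`|b1|%N)%:R : R) = 0 by apply/eqP; rewrite natZ0.
by rewrite mul0r.
Qed.


Lemma packB (b1 b2 b3 : int) : prime p -> (0 < k)%N ->
  (exists2 u, u \is a GRing.unit & psi u != 1) ->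
  Q4 (Fs b1%:~R b2%:~R b3%:~R) != 0 -> b1 != 0 -> (logn p `|b1| < k)%N ->
  (p %| `|b2| * `|b3|)%N -> ~ triv_mod psi (k - logn p `|b1| - 1).
Proof.
move=> pp k0 [u0 u0u pu0] T0 b10 mk hp tg.
have p1 : (1 < p)%N by apply: prime_gt1.
set m := logn p `|b1| in mk tg.
set g := (k - m - 1)%N in tg.
have [g0|gpos] := posnP g.
  move: tg; rewrite g0 => t0; move/negP: pu0; apply; apply/eqP; apply: t0 => //.
  by rewrite expn0 !modn1.
have N0 : (0 < `|b1|)%N by rewrite absz_gt0.
have [N' cop eN] := pfactor_coprime pp N0.
have [r er] : exists r, (`|b2| * `|b3| = r * p)%N by apply/dvdnP.
move/eqP: T0; apply.
apply: (lemB (c := (-1) ^+ (b1 < 0)%R * N'%:R) (q := (-1) ^+ (b2 < 0)%R * (-1) ^+ (b3 < 0)%R * r%:R) p1 k0 gpos _ tg).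
- by rewrite /g; lia.
- rewrite unitrM sgnU /=. rewrite unitZpE //. by rewrite coprime_pexpl.
- rewrite intZ eN -/m natrM.
  have -> : ((p ^ k.-1)%:R : R) = (p ^ m)%:R * (p ^ g)%:R.
    by rewrite -natrM -expnD; congr ((p ^ _)%:R); rewrite /g; lia.
  by ring.
- rewrite !intZ.
  have e2 : ((`|b2|%N)%:R : R) * ((`|b3|%N)%:R) = p%:R * r%:R by rewrite -!natrM er mulnC.
  transitivity ((-1) ^+ (b2 < 0)%R * (-1) ^+ (b3 < 0)%R * (((`|b2|%N)%:R : R) * ((`|b3|%N)%:R))); first by ring.
  by rewrite e2; ring.
Qed.

End T.

Lemma combi (T : nat -> Prop) (k j v1 v2 v3 : nat) :
 (forall g g', (g <= g')%N -> T g -> T g') ->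
 (v1 < k)%N -> (v2 < k)%N -> (v3 < k)%N -> T (k - v1)%N -> T (k - v2)%N -> T (k - v3)%N ->
 ((0 < v2)%N \/ (0 < v3)%N -> ~ T (k - v1 - 1)%N) ->
 ((0 < v1)%N \/ (0 < v3)%N -> ~ T (k - v2 - 1)%N) ->
 ((0 < v2)%N \/ (0 < v1)%N -> ~ T (k - v3 - 1)%N) ->
 (0 < j)%N -> (v1 = j \/ v2 = j \/ v3 = j) ->
 [/\ v1 = j, v2 = j, v3 = j, T (k - j)%N & forall g, (g < k - j)%N -> ~ T g].
Proof.
move=> mono h1 h2 h3 t1 t2 t3 n1 n2 n3 j0 hj.
have le a b : T (k - a)%N -> (a < k)%N -> ~ T (k - b - 1)%N -> (a <= b)%N.
  move=> ta ak nb; rewrite leqNgt; apply/negP => ba; apply: nb.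
  by apply: (mono (k - a)%N) => //; lia.
have [e1 e2 e3] : [/\ v1 = j, v2 = j & v3 = j].
  case: hj => [e|[e|e]].
  - have l2 : (v1 <= v2)%N by apply: le => //; apply: n2; lia.
    have l3 : (v1 <= v3)%N by apply: le => //; apply: n3; lia.
    have m2 : (v2 <= v1)%N by apply: le => //; apply: n1; lia.
    have m3 : (v3 <= v1)%N by apply: le => //; apply: n1; lia.
    by split; lia.
  - have l1 : (v2 <= v1)%N by apply: le => //; apply: n1; lia.
    have l3 : (v2 <= v3)%N by apply: le => //; apply: n3; lia.
    have m1 : (v1 <= v2)%N by apply: le => //; apply: n2; lia.
    have m3 : (v3 <= v2)%N by apply: le => //; apply: n2; lia.
    by split; lia.
  - have l1 : (v3 <= v1)%N by apply: le => //; apply: n1; lia.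
    have l2 : (v3 <= v2)%N by apply: le => //; apply: n2; lia.
    have m1 : (v1 <= v3)%N by apply: le => //; apply: n3; lia.
    have m2 : (v2 <= v3)%N by apply: le => //; apply: n3; lia.
    by split; lia.
subst; split => //.
move=> g gj tg; apply: (n1 _); first by left; lia.
by apply: (mono g) => //; lia.
Qed.

Unset Implicit Arguments.

Theorem lemma5p15 (p k : nat) (eps : int) (gamma : algC)
  (xi : ZL p k -> algC) (psi : 'Z_(p ^ k) -> algC) (a1 a2 a3 : int) (j : nat) :
  prime p -> odd p ->
  (forall x : int, ~~ (p%:Z %| x ^+ 2 - eps)%Z) ->
  `|gamma| = 1 ->
  (2 <= k)%N -> (10 <= k)%N \/ (10 <= p)%N ->
  xi_hyp eps xi ->
  dirichlet_char psi -> (exists2 u, u \is a GRing.unit & psi u != 1) ->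
  (1 <= j <= k)%N ->
  [|| vp_eq p a1 j, vp_eq p a2 j | vp_eq p a3 j] ->
  Hhat eps gamma xi psi a1 a2 a3 != 0 ->
  [/\ conductor_exp psi (k - j), vp_eq p a1 j, vp_eq p a2 j & vp_eq p a3 j].
Proof.
move=> pp _ _ _ k2 _ _ dpsi nt /andP [j1 jk] hv H0.
have p1 : (1 < p)%N by apply: prime_gt1.
have k0 : (0 < k)%N by apply: leq_trans k2.
have np : (1 < p ^ k)%N by rewrite -(expn0 p) ltn_exp2l.
have eH : Hhat eps gamma xi psi a1 a2 a3 =
    ((p%:R : algC) ^+ (2 * k))^-1 * Q4 (Fs eps gamma xi psi a1%:~R a2%:~R a3%:~R) by [].
have T1 : Q4 (Fs eps gamma xi psi a1%:~R a2%:~R a3%:~R) != 0.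
  by apply: contraNneq H0 => h; rewrite eH h mulr0.
have T2 : Q4 (Fs eps gamma xi psi a2%:~R a1%:~R a3%:~R) != 0 by rewrite -sym12.
have T3 : Q4 (Fs eps gamma xi psi a3%:~R a2%:~R a1%:~R) != 0 by rewrite -sym13.
have nt0 : ~ triv_mod psi 0.
  case: nt => u uu pu t0; move/negP: pu; apply; apply/eqP; apply: t0 => //.
  by rewrite expn0 !modn1.
have facts (b1 b2 b3 : int) : Q4 (Fs eps gamma xi psi b1%:~R b2%:~R b3%:~R) != 0 ->
   [/\ b1 != 0, (logn p `|b1| < k)%N, triv_mod psi (k - logn p `|b1|) &
       ((p %| `|b2| * `|b3|)%N -> ~ triv_mod psi (k - logn p `|b1| - 1))].
  move=> Tb.
  have nk : ~~ (p ^ k %| `|b1|)%N.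
    apply/negP => hk; apply: nt0; rewrite -(subnn k).
    exact: (packA np dpsi p1 Tb (leqnn k) hk).
  have b0 : b1 != 0 by apply: contraNneq nk => ->; rewrite dvdn0.
  have lk : (logn p `|b1| < k)%N.
    rewrite ltnNge; apply: contra nk => kl.
    exact: dvdn_trans (dvdn_exp2l p kl) (pfactor_dvdnn p `|b1|).
  split => //.
    exact: (packA np dpsi p1 Tb (ltnW lk) (pfactor_dvdnn p `|b1|)).
  exact: (packB np dpsi pp k0 nt Tb b0 lk).
have [b10 l1 t1 n1] := facts _ _ _ T1.
have [b20 l2 t2 n2] := facts _ _ _ T2.
have [b30 l3 t3 n3] := facts _ _ _ T3.
have pd (b : int) : (0 < logn p `|b|)%N -> (p %| `|b|)%N.
  move=> h; apply: dvdn_trans (pfactor_dvdnn p `|b|).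
  by rewrite -{1}(expn1 p) dvdn_exp2l.
have hj : logn p `|a1| = j \/ logn p `|a2| = j \/ logn p `|a3| = j.
  by case/or3P: hv => /andP [_ /eqP h]; [left | right; left | right; right].
have [e1 e2 e3 tj ng] := combi (@triv_mono p k psi) l1 l2 l3 t1 t2 t3
  (fun h => n1 (ltac:(case: h => h; [apply: dvdn_mulr | apply: dvdn_mull]; exact: pd)))
  (fun h => n2 (ltac:(case: h => h; [apply: dvdn_mulr | apply: dvdn_mull]; exact: pd)))
  (fun h => n3 (ltac:(case: h => h; [apply: dvdn_mulr | apply: dvdn_mull]; exact: pd)))
  j1 hj.
by split; rewrite /vp_eq ?b10 ?b20 ?b30 ?e1 ?e2 ?e3 ?eqxx.
Qed.
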